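(* Let $m$ be a positive integer satisfying $\sigma(m)\equiv 0\pmod m$, $\sigma_2(m)\equiv 2\pmod m$ and $m\equiv 0\pmod 4$. Then all odd prime factors of $m$ except exactly one occur in $m$ with even multiplicity. The remaining odd prime factor $q$ occurs with multiplicity congruent to $1 \bmod 4$, and $q\equiv 3\pmod 4$.
   Context: For integers $k\ge 0$ and $n\ge 1$, $\sigma_k(n)=\sum_{d\mid n} d^k$, and $\sigma=\sigma_1$. *)

(* Defs.v *)
From mathcomp Require Import all_boot.
Set Implicit Arguments. Unset Strict Implicit. Unset Printing Implicit Defensive.

Definition sigmak (k n : nat) : nat := \sum_(d <- divisors n) d ^ k.
Definition sigma (n : nat) : nat := sigmak 1 n.

(* Main.v *)
Require Import Defs.
From mathcomp Require Import all_boot zify.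
Set Implicit Arguments. Unset Strict Implicit.

Lemma sigmak_mul k a b : 0 < a -> 0 < b -> coprime a b ->
  sigmak k (a*b) = sigmak k a * sigmak k b.
Proof.
move=> a0 b0 cab.
have ab0 : 0 < a*b by rewrite muln_gt0 a0.
rewrite /sigmak big_distrlr /=.
have -> : \sum_(x <- divisors a) \sum_(y <- divisors b) x^k * y^k
   = \sum_(d <- [seq x*y | x <- divisors a, y <- divisors b]) d^k.
  by rewrite big_allpairs_dep; apply eq_bigr => x _; apply eq_bigr => y _; rewrite expnMn.
apply: perm_big; apply: uniq_perm.
- exact: divisors_uniq.
- apply: allpairs_uniq; try exact: divisors_uniq.
  move=> [x1 y1] [x2 y2] /allpairsP[[u1 v1] [/= hu1 hv1 [-> ->]]].
  move=> /allpairsP[[u2 v2] [/= hu2 hv2 [-> ->]]] /= E.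
  rewrite -!dvdn_divisors // in hu1 hv1 hu2 hv2.
  have cay1 : coprime a v1 by apply: coprime_dvdr hv1 cab.
  have cay2 : coprime a v2 by apply: coprime_dvdr hv2 cab.
  have cbx1 : coprime b u1 by rewrite coprime_sym; apply: coprime_dvdl hu1 cab.
  have cbx2 : coprime b u2 by rewrite coprime_sym; apply: coprime_dvdl hu2 cab.
  have g1 : gcdn a u1 = u1 by apply/gcdn_idPr.
  have g2 : gcdn a u2 = u2 by apply/gcdn_idPr.
  have g3 : gcdn b v1 = v1 by apply/gcdn_idPr.
  have g4 : gcdn b v2 = v2 by apply/gcdn_idPr.
  have e1 : u1 = u2.
    by rewrite -g1 -g2 -(Gauss_gcdl u1 cay1) -(Gauss_gcdl u2 cay2) E.
  have e2 : v1 = v2.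
    by rewrite -g3 -g4 -(Gauss_gcdr v1 cbx1) -(Gauss_gcdr v2 cbx2) E.
  by rewrite e1 e2.
- move=> d; rewrite -dvdn_divisors //; apply/idP/allpairsP.
  + move=> hd; exists (gcdn d a, gcdn d b); split => /=.
    * by rewrite -dvdn_divisors // dvdn_gcdr.
    * by rewrite -dvdn_divisors // dvdn_gcdr.
    apply/eqP; rewrite eqn_dvd; apply/andP; split.
    * rewrite muln_gcdr; rewrite dvdn_gcd dvdn_mull //=.
      by rewrite muln_gcdl dvdn_gcd hd dvdn_mulr.
    * rewrite Gauss_dvd ?dvdn_gcdl //.
      by apply: (coprime_dvdl (dvdn_gcdr _ _)); apply: (coprime_dvdr (dvdn_gcdr _ _)).
  + move=> [[x y] /= [hx hy ->]].
    by rewrite -!dvdn_divisors // in hx hy; apply: dvdn_mul.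
Qed.

Lemma sigmak_pX k p e : prime p -> sigmak k (p^e) = \sum_(i < e.+1) (p^k)^i.
Proof.
move=> pp.
have p1 : 1 < p by apply: prime_gt1.
have pe0 : 0 < p^e by rewrite expn_gt0 prime_gt0.
rewrite /sigmak.
rewrite (@perm_big _ _ _ _ _ [seq p^i | i <- iota 0 e.+1]); last first.
  apply: uniq_perm; first exact: divisors_uniq.
    by rewrite map_inj_uniq ?iota_uniq //; apply: expnI.
  move=> d; rewrite -dvdn_divisors //; apply/idP/mapP.
  + by move/(dvdn_pfactor _ _ pp) => [i hi ->]; exists i => //; rewrite mem_iota.
  + by move=> [i]; rewrite mem_iota => /andP[_ hi] ->; apply/(dvdn_pfactor _ _ pp); exists i.
rewrite big_map -(big_mkord xpredT (fun i => (p^k)^i)).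
by apply: eq_bigr => i _; rewrite -!expnM mulnC.
Qed.

Lemma sum_mod1 d N (f : nat -> nat) : (forall i, f i = 1 %[mod d]) ->
  \sum_(i < N) f i = N %[mod d].
Proof.
move=> hf; elim: N => [|N IH]; first by rewrite big_ord0.
by rewrite big_ord_recr /= -modnDm IH hf modnDm addn1.
Qed.

Lemma powmod x d i : x = 1 %[mod d] -> x^i = 1 %[mod d].
Proof. by move=> h; rewrite -modnXm h modnXm exp1n. Qed.

Lemma sigmak1 k : sigmak k 1 = 1.
Proof. by rewrite /sigmak (_ : divisors 1 = [:: 1]) // big_cons big_nil exp1n. Qed.

Lemma sigmak_prod k (s : seq nat) (e : nat -> nat) : uniq s -> all prime s ->
  sigmak k (\prod_(p <- s) p ^ e p) = \prod_(p <- s) sigmak k (p ^ e p).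
Proof.
elim: s => [|x s IH]; first by rewrite !big_nil sigmak1.
rewrite /= => /andP[xs us] /andP[px ps].
rewrite !big_cons sigmak_mul ?IH //.
- by rewrite expn_gt0 prime_gt0.
- rewrite big_seq; apply: prodn_cond_gt0 => i iS.
  by rewrite expn_gt0 prime_gt0 //; move/allP: ps; apply.
apply: coprimeXl; rewrite big_seq; apply: (big_ind (fun y => coprime x y)); first by rewrite coprimen1.
- by move=> y z; rewrite coprimeMr => -> ->.
- move=> i iS; apply: coprimeXr; rewrite prime_coprime // dvdn_prime2 //; last by move/allP: ps; apply.
  by apply/eqP => ex; move: xs; rewrite ex iS.
Qed.

Lemma prod_odd (s : seq nat) (P : pred nat) F : (forall i, i \in s -> P i -> odd (F i)) ->
  odd (\prod_(i <- s | P i) F i).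
Proof.
move=> h; rewrite big_seq_cond; apply: (big_ind (fun y => odd y)) => //.
- by move=> y z; rewrite oddM => -> ->.
- by move=> i /andP[]; apply: h.
Qed.

Lemma odd_prod_factor (s : seq nat) (P : pred nat) F : odd (\prod_(i <- s | P i) F i) ->
  forall i, i \in s -> P i -> odd (F i).
Proof.
elim: s => [|x s IH] //= h i; rewrite inE.
move: h; rewrite big_cons; case hx: (P x) => /=.
  rewrite oddM => /andP[ox os] /orP[/eqP -> // | iS] Pi; exact: IH.
move=> os /orP[/eqP ei | iS] Pi; last exact: IH.
by move: Pi; rewrite ei hx.
Qed.

Lemma geo_mod x N : \sum_(i < N.+1) x^i = 1 %[mod x].
Proof.
rewrite big_ord_recl expn0 -modnDmr (_ : (\sum_(i < N) _) %% x = 0) ?addn0 //.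
by apply/eqP; apply: dvdn_sum => i _; rewrite expnS dvdn_mulr.
Qed.

Lemma m4a x y : odd y -> (x*y) %% 4 = 0 -> x %% 4 = 0.
Proof. rewrite -modnMml -modnMmr. have:= ltn_pmod x (isT : 0 < 4). have:= ltn_pmod y (isT : 0 < 4). nia. Qed.
Lemma m4b x y : ~~ odd x -> (x*y) %% 4 = 2 -> odd y /\ x %% 4 = 2.
Proof. rewrite -modnMml -modnMmr. have:= ltn_pmod x (isT : 0 < 4). have:= ltn_pmod y (isT : 0 < 4). nia. Qed.
Lemma m4c x y : x %% 4 = 2 -> odd y -> (x*y) %% 4 = 2.
Proof. rewrite -modnMml -modnMmr. have:= ltn_pmod x (isT : 0 < 4). have:= ltn_pmod y (isT : 0 < 4). nia. Qed.
Lemma m4d x : odd x -> (x*x) %% 4 = 1.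
Proof. rewrite -modnMml -modnMmr. have:= ltn_pmod x (isT : 0 < 4). nia. Qed.

Theorem mainTheorem6 (m : nat) :
  0 < m ->
  sigma m = 0 %[mod m] ->
  sigmak 2 m = 2 %[mod m] ->
  m = 0 %[mod 4] ->
  exists q : nat,
    [/\ prime q /\ odd q, q %| m,
        logn q m = 1 %[mod 4], q = 3 %[mod 4] &
        forall p : nat, prime p -> odd p -> p %| m -> p != q ->
          ~~ odd (logn p m)].
Proof.
move=> m0 hs1 hs2 hm4.
have d4 : 4 %| m by apply/eqP.
have {}hs1 : sigmak 1 m %% 4 = 0 by rewrite -(modn_dvdm _ d4) hs1 mod0n.
have {}hs2 : sigmak 2 m %% 4 = 2 by rewrite -(modn_dvdm _ d4) hs2 (modn_dvdm _ d4).
have [n c2n mE] := pfactor_coprime (isT : prime 2) m0.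
set a := logn 2 m in mE.
have on : odd n by rewrite -coprime2n.
have n0 : 0 < n by move: m0; rewrite mE muln_gt0 => /andP[].
have cn2 : coprime n (2^a) by apply: coprimeXr; rewrite coprimen2.
rewrite mE sigmak_mul ?expn_gt0 // in hs1.
rewrite mE sigmak_mul ?expn_gt0 // in hs2.
have t2 : sigmak 2 (2^a) %% 4 = 1 by rewrite sigmak_pX // geo_mod.
have t1 : odd (sigmak 1 (2^a)).
  by have := geo_mod (2^1) a; rewrite -sigmak_pX //; lia.

rewrite -modnMmr t2 muln1 in hs2.
have {}hs1 := m4a t1 hs1.
have logm p : odd p -> logn p m = logn p n.
  move=> op; rewrite mE lognM ?expn_gt0 // lognX (@logn_prime p 2 isT).
  case: eqP => [e|_] /=; [by move: op; rewrite e | by rewrite muln0 addn0].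
have nE : n = \prod_(p <- primes n) p ^ logn p n.
  by rewrite {1}(prod_prime_decomp n0) prime_decompE big_map.
have allp : all prime (primes n) by apply/allP => p; rewrite mem_primes => /andP[].
have hT k : sigmak k n = \prod_(p <- primes n) sigmak k (p ^ logn p n).
  by rewrite {1}nE sigmak_prod // primes_uniq.
have primep p : p \in primes n -> prime p by rewrite mem_primes => /andP[].
have oddp p : p \in primes n -> odd p.
  move=> pin; case: (even_prime (primep p pin)) => // p2.
  by move: pin; rewrite mem_primes p2 dvdn2 on andbF.
have F2 p : p \in primes n -> sigmak 2 (p^logn p n) %% 4 = (logn p n).+1 %% 4.
  move=> pin; rewrite sigmak_pX ?sum_mod1 ?primep // => i.
  by apply: powmod; rewrite -mulnn m4d ?oddp.
have F1 p : p \in primes n -> sigmak 1 (p^logn p n) %% 2 = (logn p n).+1 %% 2.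
  move=> pin; rewrite sigmak_pX ?sum_mod1 ?primep // => i.
  by apply: powmod; rewrite expn1; have := oddp p pin; lia.
have F1' p : p \in primes n -> p %% 4 = 1 ->
    sigmak 1 (p^logn p n) %% 4 = (logn p n).+1 %% 4.
  move=> pin p1; rewrite sigmak_pX ?sum_mod1 ?primep // => i.
  by apply: powmod; rewrite expn1 p1.
have : ~~ all (fun p => odd (sigmak 2 (p ^ logn p n))) (primes n).
  apply/negP => /allP h.
  have ho : odd (\prod_(p <- primes n) sigmak 2 (p ^ logn p n)).
    by apply: (@prod_odd _ xpredT) => i iS _; apply: h.
  by rewrite -hT in ho; lia.
case/allPn => q qin hq.
have h2 := hs2; rewrite hT (bigD1_seq q) ?primes_uniq // in h2.
have [oR A2] := m4b hq h2.
have oq := oddp q qin.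
have pq := primep q qin.
have others p : p \in primes n -> p != q -> ~~ odd (logn p n).
  move=> pin pnq; have := odd_prod_factor oR pin pnq; have := F2 p pin; lia.
have eq1 : logn q n %% 4 = 1 by have := F2 q qin; lia.
exists q; split => //.
- by rewrite mE dvdn_mulr //; move: qin; rewrite mem_primes => /and3P[].
- by rewrite logm // eq1.
- have : q %% 4 = 1 \/ q %% 4 = 3 by lia.
  case => // q1; exfalso.
  have h1 := hs1; rewrite hT (bigD1_seq q) ?primes_uniq // in h1.
  have Aq : sigmak 1 (q ^ logn q n) %% 4 = 2 by rewrite F1' //; lia.
  have oR1 : odd (\prod_(i <- primes n | i != q) sigmak 1 (i ^ logn i n)).
    apply: prod_odd => i iS iq; have := others i iS iq; have := F1 i iS; lia.
  by have h3 := m4c Aq oR1; rewrite h3 in h1.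
- move=> p pp op pm pnq; rewrite logm //; apply: others => //.
  rewrite mem_primes pp n0 /=; move: pm; rewrite mE Gauss_dvdl //.
  by apply: coprimeXr; rewrite coprimen2.
Qed.
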